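(* Fix $\lambda\in\mathbb R$, integers $j\ge i\ge1$, and $y'>y>0$. Then almost surely $b^{\lambda,y'}_j-b^{\lambda,y}_j\ \ge\ b^{\lambda,y'}_i-b^{\lambda,y}_i$.
   Context: Last passage percolation (LPP): for a sequence $f=(f_1,f_2,\dots)$ of continuous functions on $\mathbb R$, $y\le x$ and $n\ge m$, an up-right path $\gamma$ from $(y,n)$ to $(x,m)$ is specified by jump times $y=t_{n+1}\le t_n\le\dots\le t_{m+1}\le t_m=x$; its weight is $f[\gamma]=\sum_{i=m}^n(f_i(t_i)-f_i(t_{i+1}))$, and $f[(y,n)\to(x,m)]=\sup_\gamma f[\gamma]$. The parabolic Airy line ensemble $\mathcal P=(\mathcal P_1,\mathcal P_2,\dots)$ is the random collection of continuous non-intersecting curves $\mathcal P_1>\mathcal P_2>\cdots$ on $\mathbb R$ such that for all $m$ and $t_1<\dots<t_m$ the point process $\{(\mathcal P_i(t_j)+t_j^2,t_j)\}$ is determinantal with the extended Airy kernel $K((x,t);(y,s))=\int_0^\infty e^{-u(t-s)}\mathrm{Ai}(x+u)\mathrm{Ai}(y+u)\,du$ for $t\ge s$ and $-\int_{-\infty}^0 e^{-u(t-s)}\mathrm{Ai}(x+u)\mathrm{Ai}(y+u)\,du$ for $t<s$. The parabolic Airy sheet $\mathcal S:\mathbb R^2\to\mathbb R$ is the continuous random process (unique in law) such that (i) $\mathcal S(\cdot+z,\cdot+z)\overset{d}{=}\mathcal S$ for every $z$, and (ii) $\mathcal S$ can be coupled with $\mathcal P$ so that $\mathcal S(0,\cdot)=\mathcal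 P_1$ and, a.s., for all rational $x,y,z$ with $y>0$ there is a random $K$ with $\mathcal S(y,z)-\mathcal S(y,x)=\mathcal P[(y)_k\to(z,1)]-\mathcal P[(y)_k\to(x,1)]$ for $k\ge K$, where $(y)_k=(-(k/(2y))^{1/2},k)$. We work with $\mathcal S$ and $\mathcal P$ coupled in this way. Boundary data: for $\lambda\in\mathbb R$, $y>0$, $i\in\mathbb N$, $b^{\lambda,y}_i=\lim_{k\to\infty}\big(\mathcal P[(y)_k\to(\lambda,i)]-\mathcal P[(y)_k\to(\lambda,1)]+\mathcal S(y,\lambda)\big)$; it is known that for fixed $\lambda,y$ these limits exist and are finite almost surely (indeed the sequence is eventually constant in $k$). *)

(* Defs.v *)
From HB Require Import structures.
From mathcomp Require Import all_boot all_order all_algebra.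
From mathcomp Require Import all_classical all_reals all_analysis.
Set Implicit Arguments. Unset Strict Implicit. Unset Printing Implicit Defensive.
Import Order.TTheory GRing.Theory Num.Theory.
Import numFieldNormedType.Exports.
Local Open Scope classical_set_scope.
Local Open Scope ring_scope.

Section Defs.
Variable R : realType.

Definition Ai (x : R) : R :=
  lim ((fun T : R => pi^-1 *
          fine (\int[@lebesgue_measure R]_(u in `[0%R, T]) (cos (u ^+ 3 / 3 + x * u))%:E))
       @ +oo).

Definition airy_kernel (x t y s : R) : R :=
  if s <= t then
    fine (\int[@lebesgue_measure R]_(u in `[0%R, +oo[)
            (expR (- u * (t - s)) * Ai (x + u) * Ai (y + u))%:E)
  else
    - fine (\int[@lebesgue_measure R]_(u in `]-oo, 0%R[)
            (expR (- u * (t - s)) * Ai (x + u) * Ai (y + u))%:E).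

Fixpoint iint (k : nat) (F : (nat -> R) -> \bar R) : \bar R :=
  match k with
  | 0 => F (fun _ => 0)
  | k'.+1 => (\int[@lebesgue_measure R]_(z in setT)
                iint k' (fun v => F (fun i => if i == k' then z else v i)))%E
  end.

(** Last passage value f[(y,n) -> (x,m)] for f = (f_1, f_2, ...) (index 0 unused):
    sup over jump times y = t_{n+1} <= t_n <= ... <= t_{m+1} <= t_m = x of
    sum_{i=m}^n (f_i(t_i) - f_i(t_{i+1})). *)
Definition lpp (f : nat -> R -> R) (y : R) (n : nat) (x : R) (m : nat) : R :=
  sup [set w : R | exists t : nat -> R,
         [/\ t n.+1 = y, t m = x,
             (forall i, (m <= i <= n)%N -> t i.+1 <= t i) &
             w = \sum_(m <= i < n.+1) (f i (t i) - f i (t i.+1))]].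

(** x-coordinate of the point (y)_k = (-(k/(2y))^{1/2}, k) *)
Definition ykx (y : R) (k : nat) : R := - Num.sqrt (k%:R / (2 * y)).

Variables (d : measure_display) (Omega : measurableType d).

(** P w i t = P_i(t) at outcome w, for i >= 1 (index 0 unused). *)
Definition is_parabolic_airy_line_ensemble (Pr : probability Omega R)
    (P : Omega -> nat -> R -> R) : Prop :=
  [/\ (forall w i, continuous (P w i)),
      (forall w i t, (1 <= i)%N -> P w i.+1 t < P w i t),
      (forall i t, measurable_fun setT (fun w => P w i t)) &
      (* determinantal structure of {(P_i(t_j) + t_j^2, t_j)} with the extended
         Airy kernel, via its correlation functions w.r.t. Lebesgue x counting
         measure, tested on product sets *)
      forall (m : nat) (t : 'I_m -> R), (forall a b : 'I_m, (a < b)%N -> t a < t b) ->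
      forall (k : nat) (js : 'I_k -> 'I_m) (B : 'I_k -> set R),
        (forall a, measurable (B a)) ->
        (\int[Pr]_w
           (\esum_(ii in [set ii : 'I_k -> nat |
                            injective (fun a => (ii a, js a)) /\ forall a, (1 <= ii a)%N])
              (\prod_(a < k) \1_(B a) (P w (ii a) (t (js a)) + t (js a) ^+ 2))%:E))%E
        = iint k (fun x => (\prod_(a < k) \1_(B a) (x a) *
              \det (\matrix_(a < k, b < k)
                      airy_kernel (x a) (t (js a)) (x b) (t (js b))))%:E)].

Definition is_rat (x : R) : Prop := exists q : rat, x = ratr q.

Definition is_airy_sheet_coupled (Pr : probability Omega R)
    (P : Omega -> nat -> R -> R) (S : Omega -> R -> R -> R) : Prop :=
  [/\ (forall w, continuous (fun p : R * R => S w p.1 p.2)),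
      (forall x y, measurable_fun setT (fun w => S w x y)),
      (* (i) S(. + z, . + z) =d S  (equality of finite-dimensional laws) *)
      (forall (z : R) (n : nat) (xs ys : 'I_n -> R) (B : 'I_n -> set R),
         (forall a, measurable (B a)) ->
         Pr [set w | forall a, B a (S w (xs a + z) (ys a + z))]
         = Pr [set w | forall a, B a (S w (xs a) (ys a))]),
      {ae Pr, forall w, S w 0 = P w 1%N} &
      {ae Pr, forall w, forall x y z : R, is_rat x -> is_rat y -> is_rat z -> 0 < y ->
         exists K : nat, forall k : nat, (K <= k)%N ->
           S w y z - S w y x = lpp (P w) (ykx y k) k z 1 - lpp (P w) (ykx y k) k x 1}].

Definition bdry_seq (P : Omega -> nat -> R -> R) (S : Omega -> R -> R -> R)
    (w : Omega) (lam y : R) (i : nat) (k : nat) : R :=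
  lpp (P w) (ykx y k) k lam i - lpp (P w) (ykx y k) k lam 1 + S w y lam.

Definition bdata (P : Omega -> nat -> R -> R) (S : Omega -> R -> R -> R)
    (w : Omega) (lam y : R) (i : nat) : R :=
  limn (bdry_seq P S w lam y i).

End Defs.

(* Main.v *)
Require Import Defs.
From HB Require Import structures.
From mathcomp Require Import all_boot all_order all_algebra.
From mathcomp Require Import all_classical all_reals all_analysis.
From mathcomp Require Import lra.
Import Order.TTheory GRing.Theory Num.Theory.
Import numFieldNormedType.Exports.
Local Open Scope classical_set_scope.
Local Open Scope ring_scope.
Section Det.
Variable R : realType.
Implicit Types (f : nat -> R -> R) (t : nat -> R).

Lemma chain_le t m n : (forall q, (m <= q <= n)%N -> t q.+1 <= t q) ->
  forall p q, (m <= p)%N -> (p <= q)%N -> (q <= n.+1)%N -> t q <= t p.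
Proof.
move=> H p q hp; elim: q => [|q IH].
  by rewrite leqn0 => /eqP ->.
rewrite leq_eqVlt => /predU1P [-> //|hpq] hq.
apply: le_trans (IH hpq (ltnW hq)).
apply: H; rewrite (leq_trans hp hpq) /=; by [].
Qed.

Definition lppset f y n x m := [set w : R | exists t : nat -> R,
         [/\ t n.+1 = y, t m = x,
             (forall i, (m <= i <= n)%N -> t i.+1 <= t i) &
             w = \sum_(m <= i < n.+1) (f i (t i) - f i (t i.+1))]].

Lemma lppE f y n x m : lpp f y n x m = sup (lppset f y n x m).
Proof. by []. Qed.

Lemma lppset_n0 f y n x m : y <= x -> (m <= n)%N -> lppset f y n x m !=set0.
Proof.
move=> yx mn.
exists (\sum_(m <= i < n.+1) (f i ((fun q => if (m < q)%N then y else x) i)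
   - f i ((fun q => if (m < q)%N then y else x) i.+1))).
exists (fun q => if (m < q)%N then y else x); split => //.
- by rewrite ltnS mn.
- by rewrite ltnn.
- move=> q /andP [mq _]; rewrite ltnS mq; case: ifP => //.
Qed.

Lemma lppset_ub f y n x m : (forall i, continuous (f i)) -> y <= x ->
  has_ubound (lppset f y n x m).
Proof.
move=> fc yx.
have hM : forall q, exists c, c \in `[y, x] /\ forall s, s \in `[y, x] -> f q s <= f q c.
  move=> q; have [c hc1 hc2] := EVT_max yx (@continuous_subspaceT _ _ _ _ (fc q)).
  by exists c.
have hm : forall q, exists c, c \in `[y, x] /\ forall s, s \in `[y, x] -> f q c <= f q s.
  move=> q; have [c hc1 hc2] := EVT_min yx (@continuous_subspaceT _ _ _ _ (fc q)).
  by exists c.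
have [cM HM] := choice hM; have [cm Hm] := choice hm.
exists (\sum_(m <= i < n.+1) (f i (cM i) - f i (cm i))).
move=> w [t [tn tm tmon ->]].
have tin : forall q, (m <= q <= n.+1)%N -> t q \in `[y, x].
  move=> q /andP [mq qn]; rewrite in_itv /=; apply/andP; split.
    by rewrite -tn; exact: (chain_le _ _ _ tmon _ _ mq qn (leqnn _)).
  by rewrite -tm; exact: (chain_le _ _ _ tmon _ _ (leqnn _) mq qn).
apply: ler_sum_nat => q /andP [mq qn].
apply: lerB.
  by apply: (HM q).2; apply: tin; rewrite mq ltnW.
by apply: (Hm q).2; apply: tin; rewrite (leq_trans mq (leqnSn q)) qn.
Qed.

Lemma split3 (F : nat -> R) m r n : (m <= r)%N -> (r <= n)%N ->
  \sum_(m <= q < n.+1) F q = \sum_(m <= q < r) F q + F r + \sum_(r.+1 <= q < n.+1) F q.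
Proof.
move=> mr rn.
rewrite (@big_cat_nat _ _ _ r m n.+1 _ _ mr (leqW rn)) /=.
rewrite (@big_cat_nat _ _ _ r.+1 r n.+1 _ _ (leqnSn r) rn) /=.
by rewrite big_nat1 addrA.
Qed.

Lemma find_cross (s u : nat -> R) j k : (j <= k)%N -> s j <= u j -> u k.+1 <= s k.+1 ->
  exists r, [/\ (j <= r)%N, (r <= k)%N, s r <= u r & u r.+1 <= s r.+1].
Proof.
move=> jk sj uk.
suff H : forall d r, (r + d = k)%N -> (j <= r)%N -> s r <= u r ->
  exists r', [/\ (j <= r')%N, (r' <= k)%N, s r' <= u r' & u r'.+1 <= s r'.+1].
  by apply: (H (k - j)%N j) => //; rewrite subnKC.
elim=> [|d IH] r.
  rewrite addn0 => rk jr sr; exists r; split => //; [by rewrite rk | by rewrite rk].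

move=> rd jr sr.
have [us|su] := leP (u r.+1) (s r.+1).
  exists r; split => //; rewrite -rd; exact: leq_addr.
apply: (IH r.+1) => //.
  by rewrite addSnnS.
exact: (leq_trans jr (leqnSn r)).
exact: ltW.
Qed.

Lemma cross f a a' lam i j k : a <= a' -> (i <= j)%N -> (j <= k)%N ->
  forall w1 w2, lppset f a' k lam i w1 -> lppset f a k lam j w2 ->
  exists v1, exists v2, [/\ lppset f a' k lam j v1, lppset f a k lam i v2 & w1 + w2 = v1 + v2].
Proof.
move=> aa' ij jk w1 w2 [s [sk si smon ->]] [u [uk uj umon ->]].
have sj : s j <= u j.
  rewrite uj -si; apply: (chain_le _ _ _ smon) => //.
  exact: (leq_trans jk (leqnSn k)).
have sk' : u k.+1 <= s k.+1 by rewrite sk uk.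
have [r [jr rk sr ur]] := find_cross _ _ _ _ jk sj sk'.
have ir : (i <= r)%N by exact: (leq_trans ij jr).
pose v1 := fun q => if (r < q)%N then s q else u q.
pose v2 := fun q => if (r < q)%N then u q else s q.
exists (\sum_(j <= q < k.+1) (f q (v1 q) - f q (v1 q.+1))).
exists (\sum_(i <= q < k.+1) (f q (v2 q) - f q (v2 q.+1))).
split.
- exists v1; split => //.
  + by rewrite /v1 ltnS rk.
  + by rewrite /v1 ltnNge jr.
  + move=> q /andP [jq qk]; rewrite /v1.
    case: (ltngtP r q) => [rq|qr|<-].
    * rewrite ltnS (ltnW rq); apply: smon; rewrite (leq_trans ir (ltnW rq)) //.
    * have -> : (r < q.+1)%N = false by rewrite ltnS leqNgt qr.
      by apply: umon; rewrite jq qk.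
    * rewrite ?ltnSn ?ltnn; apply: le_trans sr.
      by apply: smon; rewrite ir rk.
- exists v2; split => //.
  + by rewrite /v2 ltnS rk.
  + by rewrite /v2 ltnNge ir.
  + move=> q /andP [iq qk]; rewrite /v2.
    case: (ltngtP r q) => [rq|qr|<-].
    * rewrite ltnS (ltnW rq); apply: umon; rewrite (leq_trans jr (ltnW rq)) //.
    * have -> : (r < q.+1)%N = false by rewrite ltnS leqNgt qr.
      by apply: smon; rewrite iq qk.
    * rewrite ?ltnSn ?ltnn; apply: le_trans ur _.
      by apply: smon; rewrite ir rk.
rewrite (split3 _ _ _ _ ir rk) (split3 _ _ _ _ jr rk) (split3 _ _ _ _ jr rk) (split3 _ _ _ _ ir rk).
have e1 : \sum_(j <= q < r) (f q (v1 q) - f q (v1 q.+1)) =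
          \sum_(j <= q < r) (f q (u q) - f q (u q.+1)).
  apply: eq_big_nat => q /andP [_ qr]; rewrite /v1 ltnNge (ltnW qr) ltnNge qr //.
have e2 : \sum_(r.+1 <= q < k.+1) (f q (v1 q) - f q (v1 q.+1)) =
          \sum_(r.+1 <= q < k.+1) (f q (s q) - f q (s q.+1)).
  apply: eq_big_nat => q /andP [rq _]; rewrite /v1 rq ltnS (ltnW rq) //.
have e3 : \sum_(i <= q < r) (f q (v2 q) - f q (v2 q.+1)) =
          \sum_(i <= q < r) (f q (s q) - f q (s q.+1)).
  apply: eq_big_nat => q /andP [_ qr]; rewrite /v2 ltnNge (ltnW qr) ltnNge qr //.
have e4 : \sum_(r.+1 <= q < k.+1) (f q (v2 q) - f q (v2 q.+1)) =
          \sum_(r.+1 <= q < k.+1) (f q (u q) - f q (u q.+1)).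
  apply: eq_big_nat => q /andP [rq _]; rewrite /v2 rq ltnS (ltnW rq) //.
rewrite e1 e2 e3 e4 /v1 /v2 ltnn ltnSn.
lra.
Qed.

Lemma lpp_ineq f a a' lam i j k : (forall q, continuous (f q)) ->
  a <= a' -> a' <= lam -> (i <= j)%N -> (j <= k)%N ->
  lpp f a' k lam i + lpp f a k lam j <= lpp f a' k lam j + lpp f a k lam i.
Proof.
move=> fc aa' a'l ij jk.
have al : a <= lam by exact: le_trans a'l.
have ik : (i <= k)%N by exact: leq_trans jk.
rewrite !lppE.
set E1 := lppset f a' k lam i; set E2 := lppset f a k lam j.
set E3 := lppset f a' k lam j; set E4 := lppset f a k lam i.
have u3 := ub_le_sup (lppset_ub f a' k lam j fc a'l).
have u4 := ub_le_sup (lppset_ub f a k lam i fc al).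
have key : forall w1 w2, E1 w1 -> E2 w2 -> w1 + w2 <= sup E3 + sup E4.
  move=> w1 w2 h1 h2; have [v1 [v2 [h3 h4 ->]]] := cross f a a' lam i j k aa' ij jk w1 w2 h1 h2.
  by apply: lerD; [apply: u3|apply: u4].
have n1 : E1 !=set0 by exact: lppset_n0.
have n2 : E2 !=set0 by exact: lppset_n0.
have H1 : forall w2, E2 w2 -> sup E1 <= sup E3 + sup E4 - w2.
  move=> w2 h2; apply: ge_sup => // w1 h1; have := key _ _ h1 h2; lra.
have : sup E2 <= sup E3 + sup E4 - sup E1.
  apply: ge_sup => // w2 h2; have := H1 _ h2; lra.
lra.
Qed.

Lemma ykx_mono (y y' : R) k : 0 < y -> y < y' -> ykx y k <= ykx y' k.
Proof.
move=> y0 yy; rewrite /ykx lerN2 ler_sqrt; last first.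
  by apply: divr_ge0 => //; rewrite mulr_ge0 // ltW.
apply: ler_wpM2l => //; rewrite lef_pV2 ?posrE; lra.
Qed.

Lemma ykx_ev (y' lam : R) : 0 < y' -> exists K, forall k, (K <= k)%N -> ykx y' k <= lam.
Proof.
move=> y0.
have h0 : 0 <= lam ^+ 2 * (2 * y') by apply: mulr_ge0; [exact: sqr_ge0|lra].
exists (Num.bound (lam ^+ 2 * (2 * y'))) => k hk.
have hb := archi_boundP h0.
have hk' : lam ^+ 2 * (2 * y') <= k%:R.
  apply: le_trans (ltW hb) _; by rewrite ler_nat.
have h2 : lam ^+ 2 <= k%:R / (2 * y') by rewrite ler_pdivlMr //; lra.
have : `|lam| <= Num.sqrt (k%:R / (2 * y')).
  by rewrite -sqrtr_sqr ler_sqrt // (le_trans _ h2) // sqr_ge0.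
rewrite /ykx => h; have := ler_norm (- lam); rewrite normrN; lra.
Qed.
End Det.

Theorem corollary2p5 (R : realType) (d : measure_display) (Omega : measurableType d)
    (Pr : probability Omega R) (P : Omega -> nat -> R -> R) (S : Omega -> R -> R -> R) :
  is_parabolic_airy_line_ensemble Pr P ->
  is_airy_sheet_coupled Pr P S ->
  (* known fact: for fixed lambda, y > 0, i >= 1 the limits defining b exist a.s. *)
  (forall (lam y : R) (i : nat), 0 < y -> (1 <= i)%N ->
     {ae Pr, forall w, cvgn (bdry_seq P S w lam y i)}) ->
  forall (lam : R) (i j : nat) (y y' : R),
    (1 <= i)%N -> (i <= j)%N -> 0 < y -> y < y' ->
    {ae Pr, forall w,
       bdata P S w lam y' i - bdata P S w lam y i
       <= bdata P S w lam y' j - bdata P S w lam y j}.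
Proof.
move=> [hPc _ _ _] _ hcv lam i j y y' i1 ij y0 yy.
have y'0 : 0 < y' by exact: lt_trans yy.
have j1 : (1 <= j)%N by exact: leq_trans ij.
have c1 := hcv lam y' i y'0 i1; have c2 := hcv lam y i y0 i1.
have c3 := hcv lam y' j y'0 j1; have c4 := hcv lam y j y0 j1.
have c12 : {ae Pr, forall w, cvgn (bdry_seq P S w lam y' i) /\ cvgn (bdry_seq P S w lam y i)}.
  by apply: filterS2 c1 c2 => w a b; split.
have c34 : {ae Pr, forall w, cvgn (bdry_seq P S w lam y' j) /\ cvgn (bdry_seq P S w lam y j)}.
  by apply: filterS2 c3 c4 => w a b; split.
have [K hK] := ykx_ev _ _ lam y'0.
apply: filterS2 c12 c34 => w [h1 h2] [h3 h4].
rewrite /bdata -!limB //.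
apply: ler_lim; [exact: is_cvgB | exact: is_cvgB |].
exists (maxn K j) => // k /=; rewrite geq_max => /andP [Kk jk].
have := lpp_ineq _ (P w) (ykx y k) (ykx y' k) lam i j k (hPc w) (ykx_mono _ _ _ k y0 yy) (hK k Kk) ij jk.
rewrite /bdry_seq /=; move=> hh.
rewrite !fctE; lra.
Qed.
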